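(* (i) If $\nu$ is a shift-invariant ergodic Borel probability measure on $\Sigma_\alpha$ with $\nu(\{\zeta\in\Sigma_\alpha:\zeta_0=\beta\})<\frac12$, then $\nu(\phi_\alpha(B_\alpha))=1$. (ii) If $\nu$ is a shift-invariant ergodic Borel probability measure on $\Sigma_\beta$ with $\nu(\{\zeta\in\Sigma_\beta:\zeta_0=\alpha\})<\frac12$, then $\nu(\phi_\beta(B_\beta))=1$.
   Context: Fix an integer $M\ge2$ and let $D=\{\alpha_1,\dots,\alpha_M,\beta_1,\dots,\beta_M\}$. Dyck shift. Consider the monoid with zero generated by $D$ with unit $1$ and relations $\alpha_i\beta_j=\delta_{ij}$ (Kronecker delta). The two-sided Dyck shift is $\Sigma_D=\{\omega\in D^{\mathbb Z}:\omega_j\omega_{j+1}\cdots\omega_k\ne0$ in this monoid for all $j<k\}$. Height functions. Let $s(\alpha_k)=1$ and $s(\beta_k)=-1$. For $\omega\in\Sigma_D$, the integers $H_i(\omega)$, $i\in\mathbb Z$, are determined by $H_0=0$ and $H_{i+1}(\omega)-H_i(\omega)=s(\omega_i)$. The sets $B_\alpha,B_\beta$. $B_\alpha$ is the set of $\omega\in\Sigma_D$ such that for every $i\in\mathbb Z$, either $\omega_i\in\{\alpha_1,\dots,\alpha_M\}$, or $\omega_i\in\{\beta_1,\dots,\beta_M\}$ and $H_{i-j+1}(\omega)=H_{i+1}(\omega)$ for some $j\ge1$. $B_\beta$ is the set of $\omega\in\Sigma_D$ such that for every $i$, either $\omega_i\in\{\beta_1,\dots,\beta_M\}$, or $\omega_i\in\{\alpha_1,\dots,\alpha_M\}$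 and $H_{i+j}(\omega)=H_i(\omega)$ for some $j\ge1$. Full shifts. $\Sigma_\alpha=\{\alpha_1,\dots,\alpha_M,\beta\}^{\mathbb Z}$ and $\Sigma_\beta=\{\alpha,\beta_1,\dots,\beta_M\}^{\mathbb Z}$ are full shifts with left shifts. $\phi_\alpha:B_\alpha\to\Sigma_\alpha$ replaces every symbol $\beta_k$ by $\beta$ (keeping $\alpha_k$). $\phi_\beta:B_\beta\to\Sigma_\beta$ replaces every $\alpha_k$ by $\alpha$ (keeping $\beta_k$). *)

(* Defs.v *)
From HB Require Import structures.
From mathcomp Require Import all_boot all_order all_algebra.
From mathcomp Require Import all_classical all_reals all_analysis.
Set Implicit Arguments. Unset Strict Implicit. Unset Printing Implicit Defensive.
Import Order.TTheory GRing.Theory Num.Theory.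
Local Open Scope classical_set_scope.
Local Open Scope ring_scope.

(* ---------- Dyck alphabet D = {alpha_1..alpha_M, beta_1..beta_M} ----------
   inl k = alpha_k, inr k = beta_k  (k : 'I_M). *)
Definition dyck_letter (M : nat) := ('I_M + 'I_M)%type.

(* Normal form of an element of the Dyck monoid with zero (relations
   alpha_i beta_j = delta_ij).  Every nonzero element is uniquely
   beta_{b_1}...beta_{b_p} alpha_{a_1}...alpha_{a_q}; we represent it as
   Some (bs, stack) where bs = [b_1;...;b_p] and stack = [a_q;...;a_1]
   (top of stack first).  None is the zero of the monoid. *)
Definition dyck_step (M : nat) (st : option (seq 'I_M * seq 'I_M))
  (x : dyck_letter M) : option (seq 'I_M * seq 'I_M) :=
  match st with
  | None => None
  | Some (bs, st) =>
      match x with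
      | inl i => Some (bs, i :: st)
      | inr j =>
          match st with
          | [::] => Some (rcons bs j, [::])
          | i :: st' => if i == j then Some (bs, st') else None
          end
      end
  end.

Definition dyck_eval (M : nat) (w : seq (dyck_letter M)) :=
  foldl (@dyck_step M) (Some ([::], [::])) w.

Definition subword (X : Type) (w : int -> X) (j k : int) : seq X :=
  mkseq (fun n : nat => w (j + n%:Z)) (`|k - j|%N.+1).

Definition DyckShift (M : nat) : set (int -> dyck_letter M) :=
  [set w | forall j k : int, j < k -> dyck_eval (subword w j k) != None].

Definition sgn_letter (M : nat) (x : dyck_letter M) : int :=
  match x with inl _ => 1 | inr _ => -1 end.

(* Height function: H_0 = 0 and H_{i+1} - H_i = s(omega_i). *)
Definition height (M : nat) (w : int -> dyck_letter M) (i : int) : int :=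
  match i with
  | Posz n => \sum_(m < n) sgn_letter (w m%:Z)
  | Negz n => - \sum_(m < n.+1) sgn_letter (w (- (m.+1)%:Z))
  end.

Definition is_alpha (M : nat) (x : dyck_letter M) : bool :=
  if x is inl _ then true else false.
Definition is_beta (M : nat) (x : dyck_letter M) : bool :=
  if x is inr _ then true else false.

Definition B_alpha (M : nat) : set (int -> dyck_letter M) :=
  [set w | DyckShift w /\
    forall i : int, is_alpha (w i) \/
      (is_beta (w i) /\
       exists j : int, 1 <= j /\ height w (i - j + 1) = height w (i + 1))].

Definition B_beta (M : nat) : set (int -> dyck_letter M) :=
  [set w | DyckShift w /\
    forall i : int, is_beta (w i) \/
      (is_alpha (w i) /\
       exists j : int, 1 <= j /\ height w (i + j) = height w i)].

(* ---------- Full shifts on M+1 symbols ----------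
   Sigma_alpha = {alpha_1..alpha_M, beta}^Z : Some k = alpha_k, None = beta.
   Sigma_beta  = {alpha, beta_1..beta_M}^Z  : Some k = beta_k,  None = alpha.
   Both are the type int -> option 'I_M, equipped with the Borel sigma-algebra
   of the product topology, i.e. the sigma-algebra generated by the
   one-coordinate cylinders. *)
Definition fullshift_pts (M : nat) := int -> option 'I_M.

Definition cylinders (M : nat) : set (set (fullshift_pts M)) :=
  [set A | exists (n : int) (a : option 'I_M), A = [set w | w n = a]].

Definition FullShift (M : nat) := g_sigma_algebraType (@cylinders M).

Definition left_shift (M : nat) (w : FullShift M) : FullShift M :=
  fun i => w (i + 1).

Definition shift_invariant (M : nat) (R : realType)
  (nu : probability (FullShift M) R) : Prop :=
  forall A : set (FullShift M), measurable A ->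
    nu (@left_shift M @^-1` A) = nu A.

Definition ergodic (M : nat) (R : realType)
  (nu : probability (FullShift M) R) : Prop :=
  forall A : set (FullShift M), measurable A -> @left_shift M @^-1` A = A ->
    nu A = 0%E \/ nu A = 1%E.

Definition phi_alpha (M : nat) (w : int -> dyck_letter M) : FullShift M :=
  fun i => match w i with inl k => Some k | inr _ => None end.
Definition phi_beta (M : nat) (w : int -> dyck_letter M) : FullShift M :=
  fun i => match w i with inl _ => None | inr k => Some k end.

(* Main.v *)
Require Import Defs.
From HB Require Import structures.
From mathcomp Require Import all_boot all_order all_algebra.
From mathcomp Require Import all_classical all_reals all_analysis.
From mathcomp Require Import zify ring lra.
Import Order.TTheory GRing.Theory Num.Theory.
Set Implicit Arguments. Unset Strict Implicit. Unset Printing Implicit Defensive.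
Local Open Scope classical_set_scope.
Local Open Scope ring_scope.

Definition hg (X : Type) (s : X -> int) (f : int -> X) (i : int) : int :=
  match i with
  | Posz n => \sum_(m < n) s (f m%:Z)
  | Negz n => - \sum_(m < n.+1) s (f (- (m.+1)%:Z))
  end.

Lemma heightE M (w : int -> dyck_letter M) i : height w i = hg (@sgn_letter M) w i.
Proof. by []. Qed.

Lemma hg0 X s (f : int -> X) : hg s f 0 = 0.
Proof. by rewrite /= big_ord0. Qed.

Lemma hgS X s (f : int -> X) i : hg s f (i + 1) = hg s f i + s (f i).
Proof.
case: i => [n|n].
  have -> : n%:Z + 1 = n.+1%:Z by lia.
  by rewrite /= big_ord_recr.
case: n => [|n].
  have -> : Negz 0 + 1 = 0 by [].
  rewrite hg0 /= big_ord1 /=.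
  have e : (-1)%Z = - 1%:Z :> int by [].
  by rewrite -e addNr.
have -> : Negz n.+1 + 1 = Negz n by rewrite !NegzE; lia.
rewrite /= [in RHS]big_ord_recr /= opprD -addrA.
have -> : Negz n.+1 = - (n.+2)%:Z by rewrite NegzE.
by rewrite addNr addr0.
Qed.

Lemma hgSm X s (f : int -> X) i : hg s f (i - 1) = hg s f i - s (f (i - 1)).
Proof. by rewrite -[in hg s f i](subrK 1 i) hgS addrK. Qed.

Lemma hg_unique X s (f : int -> X) (F : int -> int) :
  F 0 = 0 -> (forall i, F (i + 1) = F i + s (f i)) -> forall i, F i = hg s f i.
Proof.
move=> F0 FS i; elim/int_rect: i => [|n IH|n IH].
- by rewrite F0 hg0.
- have -> : n.+1%:Z = n%:Z + 1 by lia.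
  by rewrite FS hgS IH.
- have e : - (n.+1)%:Z = - n%:Z - 1 by lia.
  have := FS (- n%:Z - 1); rewrite subrK e hgSm IH => ->.
  by rewrite addrK.
Qed.

Lemma hg_ext X Y s s' (f : int -> X) (g : int -> Y) :
  (forall i, s (f i) = s' (g i)) -> forall i, hg s f i = hg s' g i.
Proof.
move=> e i; apply: hg_unique; first by rewrite hg0.
by move=> j; rewrite hgS e.
Qed.

Lemma hg_shift X s (f : int -> X) (c : int) i :
  hg s (fun j => f (j + c)) i = hg s f (i + c) - hg s f c.
Proof.
symmetry; apply: (@hg_unique _ s (fun j => f (j + c)) (fun i => hg s f (i + c) - hg s f c)).
  by rewrite add0r subrr.
by move=> j /=; rewrite -addrA [1 + c]addrC addrA hgS addrAC.
Qed.

Lemma hg_sum X s (f : int -> X) (a : int) (n : nat) :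
  hg s f (a + n%:Z) - hg s f a = \sum_(m < n) s (f (a + m%:Z)).
Proof.
elim: n => [|n IH]; first by rewrite big_ord0 addr0 subrr.
have -> : n.+1%:Z = n%:Z + 1 by lia.
by rewrite big_ord_recr /= -IH addrA hgS addrAC.
Qed.

Lemma ivt_nat (f : nat -> int) (c : int) (K : nat) :
  (forall m, f m.+1 = f m + 1 \/ f m.+1 = f m - 1) -> c < f 0 ->
  (forall m, (m <= K)%N -> f m != c) -> forall m, (m <= K)%N -> c < f m.
Proof.
move=> st c0 ne; elim=> [//|m IH] le.
have := IH (ltnW le); have := ne _ le; case: (st m) => ->; lia.
Qed.

Definition hw M (w : nat -> dyck_letter M) (t : nat) : int :=
  \sum_(m < t) sgn_letter (w m).

Lemma hwS M (w : nat -> dyck_letter M) t : hw w t.+1 = hw w t + sgn_letter (w t).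
Proof. by rewrite /hw big_ord_recr. Qed.

Lemma dyck_eval_rcons M (s : seq (dyck_letter M)) x :
  dyck_eval (rcons s x) = dyck_step (dyck_eval s) x.
Proof. by rewrite /dyck_eval foldl_rcons. Qed.

Lemma dyck_window M (w : nat -> dyck_letter M) L :
  (forall a b x y, (a < b)%N -> (b < L)%N -> w a = inl x -> w b = inr y ->
     hw w b.+1 = hw w a -> (forall c, (a < c)%N -> (c <= b)%N -> hw w a < hw w c) ->
     x = y) ->
  dyck_eval (mkseq w L) != None.
Proof.
move=> H.
suff: forall t, (t <= L)%N -> exists bs st, dyck_eval (mkseq w t) = Some (bs, st) /\
  forall k, (k < size st)%N -> exists a x, [/\ (a < t)%N, w a = inl x, nth x st k = x,
     hw w a = hw w t - 1 - k%:Z & forall c, (a < c)%N -> (c <= t)%N -> hw w a < hw w c].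
  by move=> /(_ L (leqnn L)) [bs [st [-> _]]].
elim=> [_|t IH tL].
  by exists [::], [::]; split.
have [bs [st [e W]]] := IH (ltnW tL).
rewrite mkseqS dyck_eval_rcons e /=.
case wt: (w t) => [x|y].
- exists bs, (x :: st); split => // -[|k] /= klt.
    exists t, x; split => //.
      by rewrite hwS wt /=; lia.
    move=> c tc ct; have -> : c = t.+1 by lia.
    by rewrite hwS wt /=; lia.
  have [a [x' [at1 wa nx ha hc]]] := W k klt.
  exists a, x'; split => //.
  + by apply: ltnW.
  + by rewrite hwS wt /= ha; lia.
  + move=> c ac ct; case: (ltngtP c t.+1) => [ct'|ct'|->]; [by apply: hc| lia|].
    by have := hc t at1 (leqnn t); rewrite hwS wt /=; lia.
- case: st W e => [|i st'] W e.
    by exists (rcons bs y), [::]; split.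
  have [a [x [at1 wa nx ha hc]]] := W 0%N isT.
  simpl in nx; subst i.
  have xy : x = y.
    apply: (H a t) => //.
    by rewrite hwS wt ha /=; lia.
  rewrite xy eqxx.
  exists bs, st'; split => // k klt.
  have [a' [x' [at1' wa' nx' ha' hc']]] := W k.+1 klt.
  exists a', x'; split => //.
  + by apply: ltnW.
  + by rewrite hwS wt /= ha'; lia.
  + move=> c ac ct; case: (ltngtP c t.+1) => [ct'|ct'|->]; [by apply: hc'| lia|].
    by rewrite hwS wt /= ha'; lia.
Qed.

Definition PairZ M (om : int -> dyck_letter M) := forall (a b : int) x y, a < b ->
  om a = inl x -> om b = inr y -> height om (b + 1) = height om a ->
  (forall c, a < c -> c <= b -> height om a < height om c) -> x = y.

Lemma hw_height M (om : int -> dyck_letter M) (j : int) t :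
  hw (fun n : nat => om (j + n%:Z)) t = height om (j + t%:Z) - height om j.
Proof. by rewrite !heightE hg_sum. Qed.

Lemma pairZ_dyck M (om : int -> dyck_letter M) : PairZ om -> DyckShift om.
Proof.
move=> P j k jk; rewrite /subword; apply: dyck_window => a b x y ab bL wa wb hb hc.
apply: (P (j + a%:Z) (j + b%:Z)) => //.
- by rewrite ltrD2l ltz_nat.
- move: hb; rewrite !hw_height.
  have -> : j + (b.+1)%:Z = j + b%:Z + 1 by lia.
  by move=> /eqP; rewrite (can_eq (addrK _)) => /eqP.
- move=> c ac cb.
  have := hc `|c - j|%N; rewrite !hw_height.
  have -> : j + (`|c - j|%N)%:Z = c by lia.
  rewrite ltrD2r; apply; lia.
Qed.

Section Images.
Variable M : nat.
Implicit Types z : int -> option 'I_M.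

Definition sA (o : option 'I_M) : int := if o is Some _ then 1 else -1.
Definition sB (o : option 'I_M) : int := if o is Some _ then -1 else 1.

Definition CA : set (FullShift M) := [set z | forall i : int, z i <> None \/
  exists j : int, 1 <= j /\ hg sA z (i - j + 1) = hg sA z (i + 1)].
Definition CB : set (FullShift M) := [set z | forall i : int, z i <> None \/
  exists j : int, 1 <= j /\ hg sB z (i + j) = hg sB z i].

Definition partnerA z (i : int) : int :=
  match pselect (exists n : nat, (0 < n)%N && (hg sA z (i + 1 - n%:Z) == hg sA z (i + 1))) with
  | left e => i + 1 - (ex_minn e)%:Z
  | right _ => i end.

Definition partnerB z (i : int) : int :=
  match pselect (exists n : nat, (0 < n)%N && (hg sB z (i + n%:Z) == hg sB z i)) with
  | left e => i + (ex_minn e)%:Z - 1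
  | right _ => i end.

Variable d0 : 'I_M.

Definition omA z (i : int) : dyck_letter M :=
  match z i with Some x => inl x
  | None => inr (if z (partnerA z i) is Some x then x else d0) end.

Definition omB z (i : int) : dyck_letter M :=
  match z i with Some x => inr x
  | None => inl (if z (partnerB z i) is Some x then x else d0) end.

Lemma partnerA_spec z (a b : int) : a < b ->
  hg sA z (b + 1) = hg sA z a ->
  (forall c, a < c -> c <= b -> hg sA z a < hg sA z c) -> partnerA z b = a.
Proof.
move=> ab hb hc; rewrite /partnerA; case: pselect => [e|ne]; last first.
  exfalso; apply: ne; exists (absz (b + 1 - a)%R); apply/andP; split; first lia.
  have -> : b + 1 - (absz (b + 1 - a)%R)%:Z = a by lia.
  by rewrite hb.
case: (ex_minnP e) => n0 /andP [n0pos /eqP hn0] nmin.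
have := nmin (absz (b + 1 - a)%R); rewrite (_ : b + 1 - ((absz (b + 1 - a)%R))%:Z = a); last by lia.
rewrite hb eqxx andbT => /(_ ltac:(lia)) len.
case: (ltgtP a (b + 1 - n0%:Z)) => [lt|gt|eq]; last by rewrite -eq.
- by have := hc _ lt ltac:(lia); rewrite hn0 hb ltxx.
- lia.
Qed.

Lemma partnerB_spec z (a b : int) : a < b ->
  hg sB z (b + 1) = hg sB z a ->
  (forall c, a < c -> c <= b -> hg sB z a < hg sB z c) -> partnerB z a = b.
Proof.
move=> ab hb hc; rewrite /partnerB; case: pselect => [e|ne]; last first.
  exfalso; apply: ne; exists (absz (b + 1 - a)%R); apply/andP; split; first lia.
  have -> : a + (absz (b + 1 - a)%R)%:Z = b + 1 by lia.
  by rewrite hb.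
case: (ex_minnP e) => n0 /andP [n0pos /eqP hn0] nmin.
have := nmin (absz (b + 1 - a)%R); rewrite (_ : a + ((absz (b + 1 - a)%R))%:Z = b + 1); last by lia.
rewrite hb eqxx andbT => /(_ ltac:(lia)) len.
case: (ltgtP (a + n0%:Z) (b + 1)) => [lt|gt|eq]; last by lia.
- by have := hc (a + n0%:Z) ltac:(lia) ltac:(lia); rewrite hn0 ltxx.
- lia.
Qed.

Lemma height_omA z i : height (omA z) i = hg sA z i.
Proof. by rewrite heightE; apply: hg_ext => j; rewrite /omA; case: (z j). Qed.

Lemma height_omB z i : height (omB z) i = hg sB z i.
Proof. by rewrite heightE; apply: hg_ext => j; rewrite /omB; case: (z j). Qed.

Lemma pairZ_omA z : PairZ (omA z).
Proof.
move=> a b x y ab wa wb hb hc.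
move: wa wb; rewrite /omA.
case za: (z a) => [x'|] // [<-]; case zb: (z b) => [//|] [<-].
rewrite (@partnerA_spec z a b) ?za //.
- by move: hb; rewrite !height_omA.
- by move=> c ac cb; have := hc c ac cb; rewrite !height_omA.
Qed.

Lemma pairZ_omB z : PairZ (omB z).
Proof.
move=> a b x y ab wa wb hb hc.
move: wa wb; rewrite /omB.
case za: (z a) => [//|] [<-]; case zb: (z b) => [y'|//] [<-].
rewrite (@partnerB_spec z a b) ?zb //.
- by move: hb; rewrite !height_omB.
- by move=> c ac cb; have := hc c ac cb; rewrite !height_omB.
Qed.

Lemma imageA : @phi_alpha M @` @B_alpha M = CA.
Proof.
apply/seteqP; split.
  move=> _ [om [Dom Hom] <-] i.
  have hh : forall k, hg sA (phi_alpha om) k = height om k.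
    by move=> k; rewrite heightE; apply: hg_ext => j; rewrite /phi_alpha; case: (om j).
  case: (Hom i) => [al|[be [j [j1 hj]]]].
    by left; rewrite /phi_alpha; case: (om i) al.
  by right; exists j; split => //; rewrite !hh.
move=> z Cz; exists (omA z); last first.
  by apply: funext => i; rewrite /phi_alpha /omA; case: (z i).
split; first by apply: pairZ_dyck; apply: pairZ_omA.
move=> i; case: (Cz i) => [nz|[j [j1 hj]]].
  by left; rewrite /omA; case: (z i) nz.
case zi: (z i) => [x|]; first by left; rewrite /omA zi.
by right; split; [rewrite /omA zi| exists j; split => //; rewrite !height_omA].
Qed.

Lemma imageB : @phi_beta M @` @B_beta M = CB.
Proof.
apply/seteqP; split.
  move=> _ [om [Dom Hom] <-] i.
  have hh : forall k, hg sB (phi_beta om) k = height om k.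
    by move=> k; rewrite heightE; apply: hg_ext => j; rewrite /phi_beta; case: (om j).
  case: (Hom i) => [al|[be [j [j1 hj]]]].
    by left; rewrite /phi_beta; case: (om i) al.
  by right; exists j; split => //; rewrite !hh.
move=> z Cz; exists (omB z); last first.
  by apply: funext => i; rewrite /phi_beta /omB; case: (z i).
split; first by apply: pairZ_dyck; apply: pairZ_omB.
move=> i; case: (Cz i) => [nz|[j [j1 hj]]].
  by left; rewrite /omB; case: (z i) nz.
case zi: (z i) => [x|]; first by left; rewrite /omB zi.
by right; split; [rewrite /omB zi| exists j; split => //; rewrite !height_omB].
Qed.

End Images.

Section Meas.
Variable M : nat.
Local Notation T := (FullShift M).

Lemma cylM (n : int) (a : option 'I_M) : measurable [set z : T | z n = a].
Proof. by apply: sub_sigma_algebra; exists n, a. Qed.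

Definition shiftn (n : int) (z : T) : T := fun i => z (i + n).

Lemma shiftn_mfun n : measurable_fun setT (shiftn n).
Proof.
apply: (@measurability _ _ T T setT (shiftn n) (@cylinders M)) => //.
move=> _ [B [m [a ->]] <-]; rewrite setTI.
rewrite (_ : _ @^-1` _ = [set z : T | z (m + n) = a]); first exact: cylM.
by apply/seteqP; split => z.
Qed.

Lemma shift_meas n (A : set T) : measurable A -> measurable (shiftn n @^-1` A).
Proof. by move=> mA; rewrite -[_ @^-1` _]setTI; apply: shiftn_mfun. Qed.

Lemma meas_hgd (a : int) (n : nat) (c : int) :
  measurable [set z : T | hg (@sA M) z (a + n%:Z) - hg (@sA M) z a = c].
Proof.
elim: n c => [|n IH] c.
  case: (eqVneq c 0) => [->|c0].
    by rewrite (_ : [set _ | _] = setT) //; apply/seteqP; split => z //= _; rewrite addr0 subrr.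
  by rewrite (_ : [set _ | _] = set0) //; apply/seteqP; split => z //=; rewrite addr0 subrr => /esym/eqP; rewrite (negbTE c0).
rewrite (_ : [set _ | _] = ([set z : T | z (a + n%:Z) = None] `&`
    [set z : T | hg (@sA M) z (a + n%:Z) - hg (@sA M) z a = c + 1]) `|`
    (~` [set z : T | z (a + n%:Z) = None] `&`
    [set z : T | hg (@sA M) z (a + n%:Z) - hg (@sA M) z a = c - 1])).
  apply: measurableU; apply: measurableI => //; try exact: cylM.
  exact: measurableC (cylM _ _).
have e : forall z : T, hg (@sA M) z (a + n.+1%:Z) = hg (@sA M) z (a + n%:Z) + sA (z (a + n%:Z)).
  by move=> z; rewrite -hgS; congr hg; lia.
apply/seteqP; split => z /=; rewrite e; case: (z _) => [x|] /=;
  move: (hg _ z (a + n%:Z)) (hg _ z a) => p q.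
- by move=> h; right; split => //; lia.
- by move=> h; left; split => //; lia.
- by case=> -[h1 h2]; first [discriminate | lia | by case: h1].
- by case=> -[h1 h2]; first [discriminate | lia | by case: h1].
Qed.

Lemma meas_hgeq (x : int) (n : nat) :
  measurable [set z : T | hg (@sA M) z (x + n%:Z) = hg (@sA M) z x].
Proof.
rewrite (_ : [set _ | _] = [set z : T | hg (@sA M) z (x + n%:Z) - hg (@sA M) z x = 0]).
  exact: meas_hgd.
by apply/seteqP; split => z /= h; [rewrite h subrr| apply/eqP; rewrite -subr_eq0 h].
Qed.

End Meas.

Section Events.
Variable M : nat.
Local Notation T := (FullShift M).
Local Notation H := (hg (@sA M)).

Lemma meas_eqxy (x y : int) : measurable [set z : T | H z x = H z y].
Proof.
case: (leP x y) => xy.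
  rewrite (_ : [set _ | _] = [set z : T | H z (x + (absz (y - x))%:Z) = H z x]).
    exact: meas_hgeq.
  have -> : x + (absz (y - x))%:Z = y by lia.
  by apply/seteqP; split => z /= ->.
rewrite (_ : [set _ | _] = [set z : T | H z (y + (absz (x - y))%:Z) = H z y]).
  exact: meas_hgeq.
have -> : y + (absz (x - y))%:Z = x by lia.
by apply/seteqP; split => z /= ->.
Qed.

Lemma meas_neqxy (x y : int) : measurable [set z : T | H z x <> H z y].
Proof. exact: measurableC (meas_eqxy x y). Qed.

Lemma forall_pos (P : int -> Prop) :
  (forall j : int, 1 <= j -> P j) <-> (forall n : nat, P (n.+1)%:Z).
Proof.
split; first by move=> h n; apply: h; lia.
move=> h j j1; have -> : j = ((absz j).-1).+1%:Z by lia.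
exact: h.
Qed.

Definition UA (i : int) : set T := [set z | z i = None /\
  forall j : int, 1 <= j -> H z (i - j + 1) <> H z (i + 1)].
Definition VA (k : int) : set T := [set z | z k <> None /\
  forall j : int, 1 <= j -> H z (k + j) <> H z k].
Definition Bd (d : nat) : set T := [set z | z 0 = None /\ H z (- d%:Z) = H z 1 /\
  forall n : nat, (0 < n <= d)%N -> H z (1 - n%:Z) <> H z 1].

Lemma meas_UA i : measurable (UA i).
Proof.
rewrite (_ : UA i = [set z : T | z i = None] `&`
   \bigcap_n [set z : T | H z (i - (n.+1)%:Z + 1) <> H z (i + 1)]).
  apply: measurableI; first exact: cylM.
  by apply: bigcapT_measurable => n; apply: meas_neqxy.
apply/seteqP; split => z /=.
  by case=> zi h; split => // n _; apply: h; lia.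
case=> zi h; split => //; apply/forall_pos => n; exact: h.
Qed.

Lemma meas_VA k : measurable (VA k).
Proof.
rewrite (_ : VA k = ~` [set z : T | z k = None] `&`
   \bigcap_n [set z : T | H z (k + (n.+1)%:Z) <> H z k]).
  apply: measurableI; first exact: measurableC (cylM _ _).
  by apply: bigcapT_measurable => n; apply: meas_neqxy.
apply/seteqP; split => z /=.
  by case=> zi h; split => // n _; apply: h; lia.
case=> zi h; split => //; apply/forall_pos => n; exact: h.
Qed.

Lemma meas_Bd d : measurable (Bd d).
Proof.
rewrite (_ : Bd d = [set z : T | z 0 = None] `&` [set z : T | H z (- d%:Z) = H z 1] `&`
   \bigcap_n (if (0 < n <= d)%N then [set z : T | H z (1 - n%:Z) <> H z 1] else setT)).
  apply: measurableI; first apply: measurableI; first exact: cylM.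
    exact: meas_eqxy.
  apply: bigcapT_measurable => n; case: ifP => _ //; exact: meas_neqxy.
apply/seteqP; split => z /=.
  case=> zi [h1 h2]; split; first by split.
  by move=> n _; case: ifP => // /h2.
case=> -[zi h1] h2; split => //; split => // n nd.
by have := h2 n I; rewrite nd.
Qed.

Lemma hg_shiftn (z : T) m x : H (shiftn m z) x = H z (x + m) - H z m.
Proof. exact: hg_shift. Qed.

Lemma eq_shiftH (z : T) m x y : (H (shiftn m z) x = H (shiftn m z) y) <-> (H z (x + m) = H z (y + m)).
Proof.
rewrite !hg_shiftn; split => [/eqP|->//].
by rewrite (can_eq (subrK _)) => /eqP.
Qed.

Lemma UA_shift m i : shiftn m @^-1` UA i = UA (i + m).
Proof.
apply/seteqP; split => z /= [zi h]; split => // j j1.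
  have := h j j1; rewrite eq_shiftH.
  have -> : i - j + 1 + m = i + m - j + 1 by lia.
  by have -> : i + 1 + m = i + m + 1 by lia.
rewrite eq_shiftH.
have -> : i - j + 1 + m = i + m - j + 1 by lia.
have -> : i + 1 + m = i + m + 1 by lia.
exact: h.
Qed.

Lemma VA_shift m k : shiftn m @^-1` VA k = VA (k + m).
Proof.
apply/seteqP; split => z /= [zi h]; split => // j j1.
  have := h j j1; rewrite eq_shiftH.
  by have -> : k + j + m = k + m + j by lia.
rewrite eq_shiftH.
have -> : k + j + m = k + m + j by lia.
exact: h.
Qed.

End Events.

Section Comb.
Variable M : nat.
Local Notation T := (FullShift M).
Local Notation H := (hg (@sA M)).

Lemma sA_step (z : T) x : H z (x + 1) = H z x + 1 \/ H z (x + 1) = H z x - 1.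
Proof. by rewrite hgS /sA; case: (z x); [left|right]. Qed.

Lemma sA_stepm (z : T) x : H z (x - 1) = H z x + 1 \/ H z (x - 1) = H z x - 1.
Proof. by rewrite hgSm /sA; case: (z (x - 1)); [right|left; rewrite opprK]. Qed.

Lemma UA_W (z : T) k : k < 0 -> VA k z -> UA 0 z -> False.
Proof.
move=> k0 [zk hk] [z0 h0].
have a : H z k < H z 1.
  have -> : 1 = k + 1 + (absz (- k))%:Z by lia.
  apply: (@ivt_nat (fun m : nat => H z (k + 1 + m%:Z)) (H z k) (absz (- k)) _ _ _ _ (leqnn _)).
  - move=> m; have -> : k + 1 + (m.+1)%:Z = k + 1 + m%:Z + 1 by lia.
    by apply: sA_step.
  - by rewrite addr0 hgS /sA; case: (z k) zk => // x _; rewrite ltrDl.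
  - move=> m _; apply/eqP; have := hk (m.+1)%:Z ltac:(lia).
    by have -> : k + (m.+1)%:Z = k + 1 + m%:Z by lia.
have b : H z 1 < H z k.
  rewrite [X in _ < H z X](_ : k = - (absz (- k))%:Z); last by lia.
  apply: (@ivt_nat (fun m : nat => H z (- m%:Z)) (H z 1) (absz (- k)) _ _ _ _ (leqnn _)).
  - move=> m; have -> : - (m.+1)%:Z = - m%:Z - 1 by lia.
    by apply: sA_stepm.
  - by rewrite -[X in H z X]add0r hgS z0 /= big_ord0.
  - move=> m _; apply/eqP; have := h0 (m.+1)%:Z ltac:(lia).
    by have -> : 0 - (m.+1)%:Z + 1 = - m%:Z by lia.
by move: a b; lia.
Qed.

Lemma alpha0_incl (z : T) : z 0 <> None ->
  VA 0 z \/ exists d : nat, Bd d (shiftn d%:Z z).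
Proof.
move=> z0.
case: (pselect (forall j : int, 1 <= j -> H z (0 + j) <> H z 0)) => [h|nh].
  by left.
right.
have ex : exists n : nat, (0 < n)%N && (H z n%:Z == H z 0).
  apply: contrapT => ne; apply: nh => j j1 e; apply: ne; exists (absz j).
  apply/andP; split; first lia.
  by apply/eqP; rewrite -e add0r; congr H; lia.
case: (ex_minnP ex) => N /andP [N0 /eqP hN] Nmin.
have z1 : H z 1 = H z 0 + 1.
  by rewrite -[X in H z X]add0r hgS; case: (z 0) z0.
have N2 : (1 < N)%N.
  case: N N0 hN Nmin => [//|[|N]] // _ hN _.
  by move: hN; rewrite z1 => /eqP; rewrite -subr_eq0 addrAC subrr add0r.
have pos : forall m : nat, (m <= N.-2)%N -> H z 0 < H z (1 + m%:Z).
  apply: (@ivt_nat (fun m : nat => H z (1 + m%:Z))).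
  - move=> m; have -> : 1 + (m.+1)%:Z = 1 + m%:Z + 1 by lia.
    exact: sA_step.
  - by rewrite addr0 z1 ltrDl.
  - move=> m mN; apply/eqP => e.
    have := Nmin m.+1.
    have -> : (m.+1)%:Z = 1 + m%:Z by lia.
    by rewrite e eqxx => /(_ isT); lia.
have hd : H z (N.-1)%:Z > H z 0.
  have := pos N.-2 (leqnn _).
  by have -> : 1 + (N.-2)%:Z = (N.-1)%:Z by lia.
have zd : z (N.-1)%:Z = None.
  move: hN; have -> : N%:Z = (N.-1)%:Z + 1 by lia.
  rewrite hgS; case: (z _) => // x e; exfalso.
  move: hd e; rewrite [sA _]/=; move: (H z _) (H z 0) => p q; lia.
exists N.-1; split; [|split].
- by rewrite /shiftn add0r.
- apply/eq_shiftH; rewrite addNr.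
  by have -> : 1 + (N.-1)%:Z = N%:Z by lia.
- move=> n /andP [n0 nd]; move/eq_shiftH.
  have -> : 1 + (N.-1)%:Z = N%:Z by lia.
  rewrite hN => e.
  have := Nmin (N - n)%N.
  have -> : ((N - n)%N)%:Z = 1 - n%:Z + (N.-1)%:Z by lia.
  by rewrite e eqxx andbT => /(_ ltac:(lia)); lia.
Qed.

Lemma Bd_disj (d d' : nat) : (d < d')%N -> @Bd M d `&` @Bd M d' = set0.
Proof.
move=> dd; apply/seteqP; split => // z /= [[_ [h _]] [_ [_ h']]].
apply: (h' d.+1); first lia.
by have -> : 1 - (d.+1)%:Z = - d%:Z by lia.
Qed.

End Comb.

Section Core.
Variables (M : nat) (R : realType) (nu : probability (FullShift M) R).
Local Notation T := (FullShift M).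
Hypothesis inv : shift_invariant nu.

Lemma le_nu (A B : set T) : measurable A -> measurable B -> A `<=` B -> (nu A <= nu B)%E.
Proof. by move=> mA mB AB; apply: le_measure => //; rewrite inE. Qed.

Lemma shiftn_nat_inv (n : nat) (A : set T) : measurable A ->
  nu (shiftn n%:Z @^-1` A) = nu A.
Proof.
move=> mA; elim: n => [|n IH].
  by apply: f_equal; apply/seteqP; split => z /=; rewrite /shiftn;
     (have -> : (fun i => z (i + 0)) = z by apply: funext => i; rewrite addr0).
transitivity (nu (@left_shift M @^-1` (shiftn n%:Z @^-1` A))); last first.
  by rewrite inv ?IH //; apply: shift_meas.
apply: f_equal; apply/seteqP; split => z /=; rewrite /shiftn /left_shift;
  (have -> : (fun i : int => z (i + n%:Z + 1)) = (fun i : int => z (i + (n.+1)%:Z))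
     by apply: funext => i; congr z; lia) => //.
Qed.

Lemma shiftn_inv (m : int) (A : set T) : measurable A -> nu (shiftn m @^-1` A) = nu A.
Proof.
move=> mA; case: (lerP 0 m) => m0.
  have -> : m = (absz m)%:Z by lia.
  exact: shiftn_nat_inv.
have e : A = shiftn (absz m)%:Z @^-1` (shiftn m @^-1` A).
  apply/seteqP; split => z /=; rewrite /shiftn;
  (have -> : (fun i : int => z (i + m + (absz m)%:Z)) = z by apply: funext => i; congr z; lia) => //.
by rewrite [in RHS]e shiftn_nat_inv //; apply: shift_meas.
Qed.

Local Notation Z0 := [set z : T | z (0%R : int) = None].
Hypothesis erg : ergodic nu.
Hypothesis hq : (nu Z0 < ((2 : R)^-1)%:E)%E.

Lemma nu_fin (A : set T) : measurable A -> nu A \is a fin_num.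
Proof.
move=> mA; rewrite ge0_fin_numE //.
exact: le_lt_trans (probability_le1 nu mA) (ltey _).
Qed.

Lemma trivBd : trivIset setT (@Bd M).
Proof.
apply/trivIsetP => i j _ _ ij; case: (ltngtP i j) => h.
- exact: Bd_disj.
- by rewrite setIC; apply: Bd_disj.
- by rewrite h eqxx in ij.
Qed.

Lemma r_pos : nu (VA 0) != 0%E.
Proof.
pose Ad := fun d : nat => shiftn d%:Z @^-1` @Bd M d.
have mB d : measurable (@Bd M d) by apply: meas_Bd.
have mAd d : measurable (Ad d) by apply: shift_meas.
have mZ0 : measurable Z0 by apply: cylM.
have mUA : measurable (\bigcup_d Ad d) by apply: bigcupT_measurable.
have mUB : measurable (\bigcup_d @Bd M d) by apply: bigcupT_measurable.
have h1 : (nu (~` Z0) <= nu (VA 0) + nu (\bigcup_d Ad d))%E.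
  apply: le_trans (measureU2 nu (meas_VA 0) mUA).
  apply: le_nu => //; first exact: measurableC.
    exact: measurableU (meas_VA 0) mUA.
  move=> z /= z0; case: (alpha0_incl z0) => [h|[d hd]]; first by left.
  by right; exists d.
have h2 : (nu (\bigcup_d Ad d) <= \sum_(d <oo) nu (Ad d))%E.
  exact: measure_sigma_subadditive.
have h3 : (\sum_(d <oo) nu (Ad d) = \sum_(d <oo) nu (@Bd M d))%E.
  by apply: eq_eseriesr => d _; apply: shiftn_inv.
have h4 : (\sum_(d <oo) nu (@Bd M d) = nu (\bigcup_d @Bd M d))%E.
  by rewrite measure_semi_bigcup //; exact: trivBd.
have h5 : (nu (\bigcup_d @Bd M d) <= nu Z0)%E.
  by apply: le_nu => // z [d _ [? _]].
apply/eqP => r0.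
move: h1; rewrite r0 add0e probability_setC // => h.
have : (1 - nu Z0 <= nu Z0)%E.
  apply: (le_trans h); apply: (le_trans h2); rewrite h3 h4; exact: h5.
have qE := fineK (nu_fin mZ0).
move: hq; rewrite -qE lte_fin -EFinB lee_fin.
move: (fine _) => x; lra.
Qed.

Lemma VAs (k m : int) (z : T) : VA k (shiftn m z) <-> VA (k + m) z.
Proof. by rewrite -VA_shift. Qed.

Definition FF : set T := [set z | exists k, VA k z].
Definition WW : set T := [set z | exists k : int, k < 0 /\ VA k z].

Lemma meas_FF : measurable FF.
Proof.
rewrite (_ : FF = \bigcup_n (VA (Posz n) `|` VA (Negz n))).
  by apply: bigcupT_measurable => n; apply: measurableU; apply: meas_VA.
apply/seteqP; split => z /=.
  by case=> -[n|n] h; exists n => //; [left|right].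
by case=> n _ [h|h]; eexists; exact: h.
Qed.

Lemma meas_WW : measurable WW.
Proof.
rewrite (_ : WW = \bigcup_n VA (Negz n)).
  by apply: bigcupT_measurable => n; apply: meas_VA.
apply/seteqP; split => z /=.
  by move=> [[n|n] [k0 h]] //; exists n.
by case=> n _ h; exists (Negz n).
Qed.

Lemma nu_FF : nu FF = 1%E.
Proof.
have inv' : @left_shift M @^-1` FF = FF.
  apply/seteqP; split => z /= [k h].
    by exists (k + 1); apply/VAs.
  by exists (k - 1); apply/VAs; rewrite subrK.
case: (erg meas_FF inv') => // h0; exfalso.
have le : (nu (VA 0) <= nu FF)%E.
  apply: le_nu; [exact: meas_VA | exact: meas_FF | by move=> z h; exists 0].
have : nu (VA 0) = 0%E by apply/eqP; rewrite eq_le measure_ge0 andbT -h0 le.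
by move/eqP: (r_pos).
Qed.

Lemma nu_notW : nu (~` WW) = 0%E.
Proof.
pose Wn := fun n : nat => shiftn n%:Z @^-1` WW.
have mWn n : measurable (Wn n) by apply: shift_meas; exact: meas_WW.
have sub n : WW `<=` Wn n.
  move=> z [k [k0 h]]; exists (k - n%:Z); split; first lia.
  by apply/VAs; rewrite subrK.
have D0 n : nu (Wn n `\` WW) = 0%E.
  have fW : (nu (Wn n) < +oo)%E := le_lt_trans (probability_le1 nu (mWn n)) (ltey _).
  rewrite (measureD (mWn n) meas_WW fW) setIidr // /Wn /= shiftn_inv; last exact: meas_WW.
  by rewrite subee //; apply: nu_fin; exact: meas_WW.
have mD n : measurable (Wn n `\` WW) by apply: measurableD => //; exact: meas_WW.
have mU : measurable (\bigcup_n (Wn n `\` WW)) by apply: bigcupT_measurable.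
have incl : ~` WW `<=` ~` FF `|` \bigcup_n (Wn n `\` WW).
  move=> z nW; case: (pselect (FF z)) => [[k h]|nF]; last by left.
  right; case: (ltP k 0) => k0; first by exfalso; apply: nW; exists k.
  exists (absz k).+1 => //; split => //.
  exists (-1); split => //; apply/VAs.
  by have -> : -1 + ((absz k).+1)%:Z = k by lia.
have mCF : measurable (~` FF) by apply: measurableC; exact: meas_FF.
have h1 : (nu (~` WW) <= nu (~` FF) + nu (\bigcup_n (Wn n `\` WW)))%E.
  apply: le_trans (measureU2 nu mCF mU).
  apply: le_nu => //; first by apply: measurableC; exact: meas_WW.
  exact: measurableU.
have h2 : (nu (\bigcup_n (Wn n `\` WW)) <= 0)%E.
  apply: le_trans (measure_sigma_subadditive nu mD mU (@subset_refl _ _)) _.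
  by rewrite eseries0 // => n _ _; exact: D0.
have eF : nu (~` FF) = 0%E.
  by rewrite probability_setC; [rewrite nu_FF subee | exact: meas_FF].
rewrite eF add0e in h1.
apply/eqP; rewrite eq_le measure_ge0 andbT.
exact: le_trans h1 h2.
Qed.

Lemma nu_UA0 : nu (UA 0) = 0%E.
Proof.
apply/eqP; rewrite eq_le measure_ge0 andbT -nu_notW le_nu //.
- exact: meas_UA.
- by apply: measurableC; exact: meas_WW.
- by move=> z h [k [k0 hk]]; exact: UA_W k0 hk h.
Qed.

Lemma nu_UA i : nu (UA i) = 0%E.
Proof.
have := @UA_shift M i 0; rewrite add0r => <-.
by rewrite shiftn_inv ?nu_UA0 //; exact: meas_UA.
Qed.

Lemma notCA : ~` (@CA M) = \bigcup_n (UA (Posz n) `|` UA (Negz n)).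
Proof.
have E : ~` (@CA M) = [set z | exists i, UA i z].
  apply/seteqP; split => z /=.
    move=> nC; apply: contrapT => nU; apply: nC => i.
    case: (pselect (z i = None)) => zi; last by left.
    right; apply: contrapT => ne; apply: nU; exists i; split => // j j1 e.
    by apply: ne; exists j.
  move=> [i [zi h]] C; case: (C i) => // -[j [j1 e]].
  exact: h j j1 e.
rewrite E; apply/seteqP; split => z /=.
  by case=> -[n|n] h; exists n => //; [left|right].
by case=> n _ [h|h]; eexists; exact: h.
Qed.

Theorem core : measurable (@CA M) /\ nu (@CA M) = 1%E.
Proof.
have mU : measurable (\bigcup_n (@UA M (Posz n) `|` @UA M (Negz n))).
  by apply: bigcupT_measurable => n; apply: measurableU; apply: meas_UA.
have mC : measurable (@CA M).
  by rewrite -[@CA M]setCK notCA; apply: measurableC.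
split => //.
have h : nu (~` (@CA M)) = 0%E.
  rewrite notCA; apply/eqP; rewrite eq_le measure_ge0 andbT.
  apply: le_trans (measure_sigma_subadditive nu _ mU (@subset_refl _ _)) _.
    by move=> n; apply: measurableU; apply: meas_UA.
  rewrite eseries0 // => n _ _.
  rewrite measureU0; [exact: nu_UA | exact: meas_UA | exact: meas_UA | exact: nu_UA].
rewrite -[@CA M]setCK probability_setC ?h ?sube0 //.
exact: measurableC.
Qed.

End Core.

Section Refl.
Variable M : nat.
Local Notation T := (FullShift M).

Definition rho (z : T) : T := fun i => z (- i).

Lemma rho_mfun : measurable_fun setT rho.
Proof.
apply: (@measurability _ _ T T setT rho (@cylinders M)) => //.
move=> _ [B [m [a ->]] <-]; rewrite setTI.
rewrite (_ : _ @^-1` _ = [set z : T | z (- m) = a]); first exact: cylM.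
by apply/seteqP; split => z.
Qed.

HB.instance Definition _ := isMeasurableFun.Build _ _ T T rho rho_mfun.

Lemma rho_meas (A : set T) : measurable A -> measurable (rho @^-1` A).
Proof. by move=> mA; rewrite -[_ @^-1` _]setTI; apply: rho_mfun. Qed.

Lemma hgB_rho (z : T) m :
  hg (@sB M) z m = hg (@sA M) (rho z) (1 - m) - hg (@sA M) (rho z) 1.
Proof.
symmetry; apply: (@hg_unique _ (@sB M) z (fun m => hg (@sA M) (rho z) (1 - m) - hg (@sA M) (rho z) 1)).
  by rewrite subr0 subrr.
move=> i /=.
have -> : 1 - i = (1 - (i + 1)) + 1 by lia.
rewrite hgS /rho.
have -> : - (1 - (i + 1)) = i by lia.
rewrite /sA /sB; case: (z i) => [x|]; lia.
Qed.

Lemma CB_rho : @CB M = rho @^-1` @CA M.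
Proof.
have key : forall (z : T) (a b : int), (hg (@sB M) z a = hg (@sB M) z b) <->
    (hg (@sA M) (rho z) (1 - a) = hg (@sA M) (rho z) (1 - b)).
  move=> z a b; rewrite !hgB_rho; split => [/eqP|->//].
  by rewrite (can_eq (subrK _)) => /eqP.
apply/seteqP; split => z /= h i.
  case: (h (- i)) => [ne|[j [j1 e]]]; [left|right].
    by rewrite /rho.
  exists j; split => //; move/key: e.
  have e1 : 1 - (- i + j) = i - j + 1 by lia.
  have e2 : 1 - - i = i + 1 by lia.
  by rewrite e1 e2.
case: (h (- i)) => [ne|[j [j1 e]]]; [left|right].
  by move: ne; rewrite /rho opprK.
exists j; split => //; apply/key.
have e1 : 1 - (i + j) = - i - j + 1 by lia.
have e2 : 1 - i = - i + 1 by lia.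
by rewrite e1 e2.
Qed.

End Refl.

Section Transfer.
Variables (M : nat) (R : realType) (nu : probability (FullShift M) R).
Local Notation T := (FullShift M).
Hypothesis inv : shift_invariant nu.
Hypothesis erg : ergodic nu.

Local Notation nu' := (distribution nu (@rho M)).

Lemma nu'E A : nu' A = nu (@rho M @^-1` A).
Proof. by []. Qed.

Lemma inv' : shift_invariant nu'.
Proof.
move=> A mA; rewrite /distribution /pushforward /=.
transitivity (nu (shiftn (-1) @^-1` (@rho M @^-1` A))); last first.
  by rewrite shiftn_inv //; apply: rho_meas.
apply: (congr1 nu); apply/seteqP; split => z /=;
  (have -> : (@left_shift M (@rho M z)) = @rho M (shiftn (-1) z)
    by apply: funext => i; rewrite /left_shift /rho /shiftn; congr z; lia) => //.
Qed.

Lemma erg' : ergodic nu'.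
Proof.
move=> A mA hA; rewrite /distribution /pushforward /=; apply: erg; first exact: rho_meas.
have e1 : forall z : T, @rho M (@left_shift M z) = shiftn (-1) (@rho M z).
  by move=> z; apply: funext => i; rewrite /left_shift /rho /shiftn; congr z; lia.
have e2 : forall w : T, @left_shift M (shiftn (-1) w) = w.
  by move=> w; apply: funext => i; rewrite /left_shift /shiftn; congr w; lia.
have key : forall w : T, A (shiftn (-1) w) <-> A w.
  by move=> w; rewrite -[X in X (shiftn _ _) <-> _]hA /= e2.
by apply/seteqP; split => z /=; rewrite e1; [move/key | move=> h; apply/key].
Qed.

Lemma hq' : nu' [set z : T | z (0%R : int) = None] = nu [set z : T | z (0%R : int) = None].
Proof.
rewrite /distribution /pushforward /=; apply: (congr1 nu).
by apply/seteqP; split => z /=; rewrite /rho oppr0.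
Qed.

End Transfer.

Unset Implicit Arguments.
Theorem mainTheorem6 (M : nat) (R : realType) : (2 <= M)%N ->
  (forall nu : probability (FullShift M) R,
     shift_invariant nu -> ergodic nu ->
     (nu [set z : FullShift M | z (0%R : int) = None] < ((2 : R)^-1)%:E)%E ->
     measurable (@phi_alpha M @` (@B_alpha M)) /\
     nu (@phi_alpha M @` (@B_alpha M)) = 1%E) /\
  (forall nu : probability (FullShift M) R,
     shift_invariant nu -> ergodic nu ->
     (nu [set z : FullShift M | z (0%R : int) = None] < ((2 : R)^-1)%:E)%E ->
     measurable (@phi_beta M @` (@B_beta M)) /\
     nu (@phi_beta M @` (@B_beta M)) = 1%E).
Proof.
move=> M2; have d0 : 'I_M := Ordinal (leq_trans (isT : (1 <= 2)%N) M2).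
split.
- move=> nu inv erg hq; rewrite (imageA d0); exact: core inv erg hq.
- move=> nu inv erg hq; rewrite (imageB d0) CB_rho.
  have hq2 : (distribution nu (@rho M) [set z : FullShift M | z (0%R : int) = None]
      < ((2 : R)^-1)%:E)%E by rewrite hq'.
  have [mC h] := core (inv' inv) (erg' erg) hq2.
  split; first exact: rho_meas.
  by move: h; rewrite /distribution /pushforward.
Qed.
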